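(* Let $\mathcal{X}$ and $\mathcal{Y}$ be finite sets with $2 \le |\mathcal{X}|,|\mathcal{Y}| < \infty$, and let $X,Y$ have joint pmf $P_{X,Y}$ with $P_X(x)>0$ for all $x\in\mathcal{X}$ and $P_Y(y)>0$ for all $y\in\mathcal{Y}$. Writing $\eta_{\chi^2}=\eta_{\chi^2}(P_X,P_{Y|X})$ and $\eta_{\mathrm{KL}}=\eta_{\mathrm{KL}}(P_X,P_{Y|X})$, we have $$\eta_{\chi^2}\le\eta_{\mathrm{KL}}\le \frac{2\,\eta_{\chi^2}}{\phi\!\left(\max_{A\subseteq\mathcal{X}}\min\{P_X(A),1-P_X(A)\}\right)\min_{x\in\mathcal{X}}P_X(x)},$$ where $\phi:[0,\tfrac12]\to\mathbb{R}$ is given by $\phi(p)=\frac{1}{1-2p}\log\frac{1-p}{p}$ for $p\in[0,\tfrac12)$ and $\phi(\tfrac12)=2$.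
   Context: $P_X(A)=\sum_{x\in A}P_X(x)$. Let $W$ be the column stochastic matrix of the channel $P_{Y|X}$ (its $x$th column is $P_{Y|X=x}$), mapping a pmf $R_X$ on $\mathcal{X}$ to $WR_X$. The KL divergence is $D(R_X\|P_X)=\sum_x R_X(x)\log(R_X(x)/P_X(x))$ (natural log), and $\chi^2(R_X\|P_X)=\sum_x (R_X(x)-P_X(x))^2/P_X(x)$. For $D_\bullet\in\{D,\chi^2\}$, the contraction coefficient is $\eta_\bullet(P_X,P_{Y|X})=\sup\{D_\bullet(WR_X\|WP_X)/D_\bullet(R_X\|P_X): R_X \text{ a pmf on } \mathcal{X},\ 0<D_\bullet(R_X\|P_X)<\infty\}$; $\eta_{\mathrm{KL}}$ uses KL divergence and $\eta_{\chi^2}$ uses $\chi^2$-divergence. *)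

(* Defs.v *)
From HB Require Import structures.
From mathcomp Require Import all_boot all_order all_algebra.
From mathcomp Require Import all_classical all_reals exp.
Set Implicit Arguments. Unset Strict Implicit. Unset Printing Implicit Defensive.
Import Order.TTheory GRing.Theory Num.Theory.
Local Open Scope ring_scope.
Local Open Scope classical_set_scope.

Section Defs.
Variables (R : realType) (X Y : finType).

Definition is_pmf (T : finType) (p : T -> R) : Prop :=
  (forall t, 0 <= p t) /\ \sum_t p t = 1.

Definition marg1 (P : X * Y -> R) (x : X) : R := \sum_y P (x, y).
Definition marg2 (P : X * Y -> R) (y : Y) : R := \sum_x P (x, y).

Definition probset (T : finType) (p : T -> R) (A : {set T}) : R :=
  \sum_(t in A) p t.

(* the channel P_{Y|X}: W y x = P_{Y|X=x}(y) *)
Definition chan (P : X * Y -> R) (y : Y) (x : X) : R := P (x, y) / marg1 P x.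

Definition chan_apply (W : Y -> X -> R) (r : X -> R) (y : Y) : R :=
  \sum_x W y x * r x.

End Defs.

Definition KL (R : realType) (T : finType) (r p : T -> R) : R :=
  \sum_t (if r t == 0 then 0 else r t * ln (r t / p t)).

Definition chi2 (R : realType) (T : finType) (r p : T -> R) : R :=
  \sum_t (r t - p t) ^+ 2 / p t.

(* contraction coefficient for a divergence Dv (all divergences here are
   finite since p has full support) *)
Definition contraction (R : realType) (X Y : finType)
    (Dv : forall T : finType, (T -> R) -> (T -> R) -> R)
    (p : X -> R) (W : Y -> X -> R) : R :=
  sup [set t : R | exists r : X -> R,
         is_pmf r /\ 0 < Dv X r p /\
         t = Dv Y (chan_apply W r) (chan_apply W p) / Dv X r p].

Definition eta_KL (R : realType) (X Y : finType) (p : X -> R) (W : Y -> X -> R) :=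
  contraction (@KL R) p W.
Definition eta_chi2 (R : realType) (X Y : finType) (p : X -> R) (W : Y -> X -> R) :=
  contraction (@chi2 R) p W.

Definition phi (R : realType) (p : R) : R :=
  if p == 2^-1 then 2 else ln ((1 - p) / p) / (1 - 2 * p).

(* Main.v *)
Require Import Defs.
From HB Require Import structures.
From mathcomp Require Import all_boot all_order all_algebra.
From mathcomp Require Import all_classical all_reals exp.
From mathcomp Require Import topology normedtype derive realfun sequences.
From mathcomp Require Import ring lra.
Import Order.TTheory GRing.Theory Num.Theory numFieldNormedType.Exports.
Local Open Scope ring_scope.

Section S.
Variable R : realType.

Lemma incr_deriv (f df : R -> R) (a b : R) :
  (forall x, a <= x <= b -> is_derive x 1 f (df x)) ->
  (forall x, a <= x <= b -> 0 <= df x) -> a <= b -> f a <= f b.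
Proof.
move=> hd hp ab.
apply: (@ger0_derive1_ndecr R f a b) => //.
- move=> x; rewrite in_itv /= => /andP[h1 h2].
  have hx : a <= x <= b by rewrite !ltW.
  by have [] := hd x hx.
- move=> x; rewrite in_itv /= => /andP[h1 h2].
  have hx : a <= x <= b by rewrite !ltW.
  have H := hd x hx. rewrite derive1E derive_val. exact: hp.
- apply: derivable_within_continuous => x; rewrite in_itv /= => hx.
  by have [] := hd x hx.
Qed.

Lemma decr_deriv (f df : R -> R) (a b : R) :
  (forall x, a <= x <= b -> is_derive x 1 f (df x)) ->
  (forall x, a <= x <= b -> df x <= 0) -> a <= b -> f b <= f a.
Proof.
move=> hd hp ab.
rewrite -lerN2.
apply: (@incr_deriv (fun x => - f x) (fun x => - df x)) => // x hx.
  have := hd x hx => H; exact: is_deriveN.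
by rewrite oppr_ge0 hp.
Qed.
End S.

Section S.
Variable R : realType.

Lemma dF (u : R) : 0 < u ->
  is_derive u 1 (fun v : R => ln v - 2 + 4 * (v + 1)^-1) (u^-1 - 4 / (u+1)^+2).
Proof.
move=> u0.
have h1 : is_derive u 1 (@ln R) u^-1 by exact: is_derive1_ln.
have h2 : is_derive u 1 (fun v : R => (v + 1)^-1) (- (u+1) ^- 2 *: 1).
  apply: is_deriveV; first by rewrite gt_eqF // ltr_wpDl ?ltW.
  by apply: trigger_derive; rewrite addr0.
apply: trigger_derive.
rewrite /GRing.scale /= mulr1 subr0. ring.
Qed.

Lemma dF_ge0 (u : R) : 0 < u -> 0 <= u^-1 - 4 / (u+1)^+2.
Proof.
move=> u0.
have -> : u^-1 - 4 / (u+1)^+2 = (u-1)^+2 / (u * (u+1)^+2).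
  by field; apply/andP; split; rewrite gt_eqF // ?ltr_wpDl ?ltW.
by rewrite divr_ge0 // ?sqr_ge0 // mulr_ge0 // ?sqr_ge0 // ltW.
Qed.

Lemma Fv (u : R) : 0 < u -> ln u - 2 + 4 * (u + 1)^-1 = ln u - 2 * (u - 1) / (u + 1).
Proof. move=> u0. field. by rewrite gt_eqF // ltr_wpDl ?ltW. Qed.

Lemma ln_lb1 (u : R) : 1 <= u -> 2 * (u - 1) / (u + 1) <= ln u.
Proof.
move=> u1. rewrite -subr_ge0 -Fv; last by lra.
have := @incr_deriv R (fun v : R => ln v - 2 + 4 * (v + 1)^-1)
   (fun u => u^-1 - 4 / (u+1)^+2) 1 u.
rewrite ln1 /=. have -> : 0 - 2 + 4 * (1 + 1)^-1 = 0 :> R by field.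
apply.
- move=> x hx; apply: dF; lra.
- move=> x hx; apply: dF_ge0; lra.
- done.
Qed.

Lemma ln_ub1 (u : R) : 0 < u -> u <= 1 -> ln u <= 2 * (u - 1) / (u + 1).
Proof.
move=> u0 u1. rewrite -subr_le0 -Fv //.
have := @incr_deriv R (fun v : R => ln v - 2 + 4 * (v + 1)^-1)
   (fun u => u^-1 - 4 / (u+1)^+2) u 1.
rewrite ln1 /=. have -> : 0 - 2 + 4 * (1 + 1)^-1 = 0 :> R by field.
apply.
- move=> x hx; apply: dF; lra.
- move=> x hx; apply: dF_ge0; lra.
- done.
Qed.

Lemma dG (u : R) : 0 < u ->
  is_derive u 1 (fun v : R => (v - v^-1) / 2 - ln v) ((1 + u^-2) / 2 - u^-1).
Proof.
move=> u0.
have h1 : is_derive u 1 (@ln R) u^-1 by exact: is_derive1_ln.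
have h2 : is_derive u 1 (fun v : R => v^-1) (- u ^- 2 *: 1).
  apply: is_deriveV; first by rewrite gt_eqF.
apply: trigger_derive.
rewrite /GRing.scale /= ?mulr1. by field; rewrite gt_eqF.
Qed.

Lemma dG_ge0 (u : R) : 0 < u -> 0 <= (1 + u^-2) / 2 - u^-1.
Proof.
move=> u0.
have -> : (1 + u^-2) / 2 - u^-1 = (u-1)^+2 / (2 * u^+2).
  by field; rewrite gt_eqF.
by rewrite divr_ge0 // ?sqr_ge0 // mulr_ge0 // ?sqr_ge0.
Qed.

Lemma ln_ub2 (u : R) : 1 <= u -> ln u <= (u - u^-1) / 2.
Proof.
move=> u1. rewrite -subr_ge0.
have := @incr_deriv R (fun v : R => (v - v^-1) / 2 - ln v)
   (fun u => (1 + u^-2) / 2 - u^-1) 1 u.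
rewrite ln1 invr1 subrr mul0r subr0. apply.
- move=> x hx; apply: dG; lra.
- move=> x hx; apply: dG_ge0; lra.
- done.
Qed.

Lemma ln_lb2 (u : R) : 0 < u -> u <= 1 -> (u - u^-1) / 2 <= ln u.
Proof.
move=> u0 u1. rewrite -subr_le0.
have := @incr_deriv R (fun v : R => (v - v^-1) / 2 - ln v)
   (fun u => (1 + u^-2) / 2 - u^-1) u 1.
rewrite ln1 invr1 subrr mul0r subr0. apply.
- move=> x hx; apply: dG; lra.
- move=> x hx; apply: dG_ge0; lra.
- done.
Qed.

Lemma hub (t : R) : -1 <= t ->
  (1 + t) * ln (1 + t) <= t + t^+2 / 2 + `|t|^+3 / 2.
Proof.
move=> t1.
have [->|tgt] := eqVneq t (-1).
  rewrite subrr ln0 // mulr0 normrN normr1 expr1n. lra.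
have t1' : -1 < t by rewrite lt_neqAle eq_sym tgt.
have u0 : 0 < 1 + t by lra.
have [t0|t0] := leP 0 t.
- have := @ln_ub2 (1 + t) ltac:(lra) => h.
  have := ler_wpM2l (ltW u0) h => h2.
  apply: (le_trans h2).
  rewrite ger0_norm //.
  have -> : (1 + t) * ((1 + t - (1 + t)^-1) / 2) = t + t^+2 / 2.
    by field; rewrite gt_eqF.
  have : 0 <= t ^+ 3 / 2 by rewrite divr_ge0 // exprn_ge0.
  lra.
- have := @ln_ub1 (1 + t) u0 ltac:(lra) => h.
  have := ler_wpM2l (ltW u0) h => h2.
  apply: (le_trans h2).
  rewrite ltr0_norm //.
  set w := (1 + t + 1)^-1.
  have hw : w * (2 + t) = 1 by rewrite /w; field; rewrite gt_eqF //; lra.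
  have w0 : 0 < w by rewrite /w invr_gt0; lra.
  have -> : (1 + t) * (2 * (1 + t - 1) / (1 + t + 1)) = 2 * t * (1 + t) * w.
    by rewrite /w; field; rewrite gt_eqF //; lra.
  have e1 : 2 * t * (1 + t) * w = t + t^+2 * w.
    have -> : 2 * t * (1 + t) = t * (2 + t) + t^+2 by ring.
    by rewrite mulrDl -mulrA [(2 + t) * w]mulrC hw mulr1.
  have e2 : w <= (1 - t) / 2.
    have h0 : 0 <= w * (- t * (1 + t)) by apply: mulr_ge0; [exact: ltW | nra].
    have h3 : t * (w * (2 + t)) = t by rewrite hw mulr1.
    nra.
  rewrite e1.
  have : t^+2 * w <= t^+2 * ((1 - t) / 2) by rewrite ler_wpM2l // sqr_ge0.
  have -> : (- t)^+3 = - (t^+2 * t) by ring.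
  have -> : t^+2 * ((1 - t) / 2) = t^+2 / 2 - t^+2 * t / 2 by ring.
  lra.
Qed.

Lemma hlb (t : R) : -1 <= t ->
  t + t^+2 / 2 - `|t|^+3 / 2 <= (1 + t) * ln (1 + t).
Proof.
move=> t1.
have [->|tgt] := eqVneq t (-1).
  rewrite subrr ln0 // mulr0 normrN normr1 expr1n. lra.
have t1' : -1 < t by rewrite lt_neqAle eq_sym tgt.
have u0 : 0 < 1 + t by lra.
have [t0|t0] := leP 0 t.
- have := @ln_lb1 (1 + t) ltac:(lra) => h.
  have := ler_wpM2l (ltW u0) h => h2.
  apply: (le_trans _ h2).
  rewrite ger0_norm //.
  set w := (1 + t + 1)^-1.
  have hw : w * (2 + t) = 1 by rewrite /w; field; rewrite gt_eqF //; lra.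
  have w0 : 0 < w by rewrite /w invr_gt0; lra.
  have -> : (1 + t) * (2 * (1 + t - 1) / (1 + t + 1)) = 2 * t * (1 + t) * w.
    by rewrite /w; field; rewrite gt_eqF //; lra.
  have e1 : 2 * t * (1 + t) * w = t + t^+2 * w.
    have -> : 2 * t * (1 + t) = t * (2 + t) + t^+2 by ring.
    by rewrite mulrDl -mulrA [(2 + t) * w]mulrC hw mulr1.
  have e2 : (1 - t) / 2 <= w.
    have h0 : 0 <= w * (t * (1 + t)) by apply: mulr_ge0; [exact: ltW | nra].
    have h3 : t * (w * (2 + t)) = t by rewrite hw mulr1.
    nra.
  rewrite e1.
  have : t^+2 * ((1 - t) / 2) <= t^+2 * w by rewrite ler_wpM2l // sqr_ge0.
  have -> : t^+3 = t^+2 * t by ring.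
  have -> : t^+2 * ((1 - t) / 2) = t^+2 / 2 - t^+2 * t / 2 by ring.
  lra.
- have := @ln_lb2 (1 + t) u0 ltac:(lra) => h.
  have := ler_wpM2l (ltW u0) h => h2.
  apply: (le_trans _ h2).
  have -> : (1 + t) * ((1 + t - (1 + t)^-1) / 2) = t + t^+2 / 2.
    by field; rewrite gt_eqF.
  have : 0 <= `|t| ^+ 3 / 2 by rewrite divr_ge0 // exprn_ge0.
  lra.
Qed.
End S.

Section S.
Variable R : realType.

Definition Phi (u : R) := ln u * (1 + 2 * (u - 1)^-1).

Lemma dPhi (u : R) : 1 < u ->
  is_derive u 1 Phi (u^-1 * (1 + 2 * (u - 1)^-1) - ln u * (2 * (u - 1)^-2)).
Proof.
move=> u1.
have h1 : is_derive u 1 (@ln R) u^-1 by apply: is_derive1_ln; lra.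
have h2 : is_derive u 1 (fun v : R => (v - 1)^-1) (- (u-1) ^- 2 *: 1).
  apply: is_deriveV; first by rewrite gt_eqF //; lra.
  by apply: trigger_derive; rewrite subr0.
rewrite /Phi. apply: trigger_derive.
rewrite /GRing.scale /= ?mulr1. ring.
Qed.

Lemma dPhi_ge0 (u : R) : 1 < u ->
  0 <= u^-1 * (1 + 2 * (u - 1)^-1) - ln u * (2 * (u - 1)^-2).
Proof.
move=> u1.
have -> : u^-1 * (1 + 2 * (u - 1)^-1) - ln u * (2 * (u - 1)^-2)
   = 2 * ((u - u^-1) / 2 - ln u) / (u - 1)^+2.
  by field; rewrite !gt_eqF //; lra.
apply: divr_ge0; last exact: sqr_ge0.
apply: mulr_ge0 => //. rewrite subr_ge0. apply: ln_ub2. lra.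
Qed.

Lemma Phi_mono (u v : R) : 1 < u -> u <= v -> Phi u <= Phi v.
Proof.
move=> u1 uv.
apply: (@incr_deriv R Phi (fun u => u^-1 * (1 + 2 * (u - 1)^-1) - ln u * (2 * (u - 1)^-2))) => // x hx.
  apply: dPhi; lra.
apply: dPhi_ge0; lra.
Qed.

Lemma phi_Phi (m : R) : 0 < m < 2^-1 -> phi m = Phi ((1 - m) / m).
Proof.
move=> hm.
rewrite /phi /Phi ifF; last by apply/negbTE; rewrite lt_eqF //; lra.
have m0 : m != 0 by rewrite gt_eqF //; lra.
congr (_ * _).
have -> : (1 - m) / m - 1 = (1 - 2 * m) / m by field.
rewrite invf_div. field. rewrite gt_eqF //; lra.
Qed.

Lemma phi_ge2 (m : R) : 0 < m <= 2^-1 -> 2 <= phi m.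
Proof.
move=> hm. rewrite /phi. case: ifP => [_|/negbT hne]; first lra.
have m1 : m < 2^-1 by rewrite lt_neqAle hne; lra.
have hu : 1 <= (1 - m) / m by rewrite ler_pdivlMr; lra.
have := @ln_lb1 R _ hu.
have -> : 2 * ((1 - m) / m - 1) / ((1 - m) / m + 1) = 2 * (1 - 2 * m).
  field. apply/andP; split; rewrite gt_eqF //; lra.
move=> h. rewrite ler_pdivlMr; last lra. lra.
Qed.

Lemma phi_mono (m p : R) : 0 < m -> m <= p -> p <= 2^-1 -> phi p <= phi m.
Proof.
move=> m0 mp p2.
have [pe|pne] := eqVneq p 2^-1.
  rewrite {1}/phi pe eqxx. apply: phi_ge2. lra.
have p1 : p < 2^-1 by rewrite lt_neqAle pne.
rewrite phi_Phi; last lra. rewrite phi_Phi; last lra.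
apply: Phi_mono.
  rewrite ltr_pdivlMr; lra.
rewrite ler_pdivlMr // mulrAC ler_pdivrMr; lra.
Qed.
End S.

Section S.
Variable R : realType.

Lemma dln1m (q : R) : q < 1 -> is_derive q 1 (fun v : R => ln (1 - v)) (- (1 - q)^-1).
Proof.
move=> q1.
have h1 : is_derive (1 - q) 1 (@ln R) (1 - q)^-1 by apply: is_derive1_ln; lra.
have h2 : is_derive q 1 (fun v : R => 1 - v) (-1).
  by apply: trigger_derive; rewrite add0r mul1r.
have := @is_derive1_comp R (@ln R) (fun v => 1 - v) q _ _ h1 h2. rewrite mulrN1. exact.
Qed.

Definition psi (p c q : R) :=
  q * (ln q - ln p) + (1 - q) * (ln (1 - q) - ln (1 - p)) - c * (q - p)^+2.
Definition kk (p c q : R) := ln q - ln (1 - q) - ln p + ln (1 - p) - 2 * c * (q - p).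
Definition dk (c q : R) := (q * (1 - q))^-1 - 2 * c.

Lemma dpsi (p c q : R) : 0 < q < 1 -> is_derive q 1 (psi p c) (kk p c q).
Proof.
move=> hq.
have h1 : is_derive q 1 (@ln R) q^-1 by apply: is_derive1_ln; lra.
have h2 := @dln1m q ltac:(lra).
rewrite /psi. apply: trigger_derive. rewrite /kk /GRing.scale /=.
by field; apply/andP; split; rewrite gt_eqF //; lra.
Qed.

Lemma dkk (p c q : R) : 0 < q < 1 -> is_derive q 1 (kk p c) (dk c q).
Proof.
move=> hq.
have h1 : is_derive q 1 (@ln R) q^-1 by apply: is_derive1_ln; lra.
have h2 := @dln1m q ltac:(lra).
rewrite /kk. apply: trigger_derive. rewrite /dk /GRing.scale /=.
by field; apply/andP; split; rewrite gt_eqF //; lra.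
Qed.

Lemma key_c (p : R) : 0 < p <= 2^-1 -> phi p * (1 - 2 * p) = ln (1 - p) - ln p.
Proof.
move=> hp. rewrite /phi. case: ifP => [/eqP ->|/negbT hne].
  have -> : 1 - 2^-1 = 2^-1 :> R by field.
  rewrite subrr. have -> : 1 - 2 * 2^-1 = 0 :> R by field.
  by rewrite mulr0.
rewrite ln_div ?posrE; [|lra|lra].
have p1 : p < 2^-1 by rewrite lt_neqAle hne; lra.
by field; rewrite gt_eqF //; lra.
Qed.

Lemma kk_p (p c : R) : kk p c p = 0.
Proof. rewrite /kk subrr mulr0. ring. Qed.

Lemma kk_half (p : R) : 0 < p <= 2^-1 -> kk p (phi p) 2^-1 = 0.
Proof.
move=> hp. rewrite /kk.
have -> : 1 - 2^-1 = 2^-1 :> R by field.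
have := key_c p hp. move=> h.
have -> : 2 * phi p * (2^-1 - p) = phi p * (1 - 2 * p) by field.
rewrite h. ring.
Qed.

Lemma kk_sym (p q : R) : 0 < p <= 2^-1 -> kk p (phi p) (1 - q) = - kk p (phi p) q.
Proof.
move=> hp. rewrite /kk.
have -> : 1 - (1 - q) = q by ring.
have h := key_c p hp.
have -> : 2 * phi p * (1 - q - p) = phi p * (1 - 2 * p) * 2 - 2 * phi p * (q - p) by ring.
rewrite h. ring.
Qed.

Lemma dk_mono (c q s : R) : 0 < q -> q <= s -> s <= 2^-1 -> dk c s <= dk c q.
Proof.
move=> q0 qs s2. rewrite /dk lerD2r. rewrite lef_pV2 ?posrE; [|nra|nra].
nra.
Qed.

Lemma kk_sign (p : R) : 0 < p <= 2^-1 ->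
  (forall q, 0 < q <= p -> kk p (phi p) q <= 0) /\
  (forall q, p <= q <= 2^-1 -> 0 <= kk p (phi p) q).
Proof.
move=> hp.
set c := phi p.
have dK : forall x : R, 0 < x < 1 -> is_derive x 1 (kk p c) (dk c x).
  by move=> x hx; apply: dkk.
have [pe|pne] := eqVneq p 2^-1.
  have hc : c = 2 by rewrite /c /phi pe eqxx.
  split => q hq; last first.
    have -> : q = p by lra.
    by rewrite kk_p.
  rewrite -(kk_p p c).
  apply: (@incr_deriv R (kk p c) (dk c) q p) => [x hx|x hx|]; last lra.
    apply: dK; lra.
  rewrite /dk hc subr_ge0.
  have hx0 : 0 < x * (1 - x) by nra.
  rewrite -div1r ler_pdivlMr //. nra.
have p1 : p < 2^-1 by rewrite lt_neqAle pne; lra.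
have [s sI hs] : exists2 s, s \in `]p, 2^-1[ & kk p c 2^-1 - kk p c p = dk c s * (2^-1 - p).
  apply: MVT => //.
    move=> x; rewrite in_itv /= => /andP[h1 h2]; apply: dK; lra.
  apply: derivable_within_continuous => x; rewrite in_itv /= => /andP[h1 h2].
  have [] := dK x ltac:(lra). done.
move: sI; rewrite in_itv /= => /andP[s1 s2].
rewrite kk_half // kk_p subrr in hs.
have ds : dk c s = 0.
  apply/eqP; move: hs => /esym /eqP; rewrite mulf_eq0 => /orP[//|].
  by rewrite subr_eq0 => /eqP h; exfalso; lra.
split => q hq.
- rewrite -(kk_p p c).
  apply: (@incr_deriv R (kk p c) (dk c) q p) => [x hx|x hx|]; last lra.
    apply: dK; lra.
  rewrite -ds. apply: dk_mono; lra.
- have [qs|sq] := leP q s.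
  + rewrite -(kk_p p c).
    apply: (@incr_deriv R (kk p c) (dk c) p q) => [x hx|x hx|]; last lra.
      apply: dK; lra.
    rewrite -ds. apply: dk_mono; lra.
  + rewrite -(kk_half p hp).
    apply: (@decr_deriv R (kk p c) (dk c) q 2^-1) => [x hx|x hx|]; last lra.
      apply: dK; lra.
    rewrite -ds. apply: dk_mono; lra.
Qed.

Lemma psi_ge0 (p q : R) : 0 < p <= 2^-1 -> 0 < q < 1 -> 0 <= psi p (phi p) q.
Proof.
move=> hp hq.
set c := phi p.
have dP : forall x : R, 0 < x < 1 -> is_derive x 1 (psi p c) (kk p c x).
  by move=> x hx; apply: dpsi.
have [ks1 ks2] := kk_sign p hp.
have ksym : forall x, kk p c x = - kk p c (1 - x).
  move=> x. have h := kk_sym p (1 - x) hp. rewrite (_ : 1 - (1 - x) = x) in h; last by ring. by rewrite /c h.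
have psip : psi p c p = 0 by rewrite /psi !subrr; ring.
have psi1p : psi p c (1 - p) = 0.
  rewrite /psi. have -> : 1 - (1 - p) = p by ring.
  have h := key_c p hp.
  have -> : c * (1 - p - p) ^+ 2 = c * (1 - 2 * p) * (1 - 2 * p) by ring.
  rewrite /c h. ring.
have [qp|pq] := leP q p.
  rewrite -psip.
  apply: (@decr_deriv R (psi p c) (kk p c) q p) => [x hx|x hx|]; last lra.
    apply: dP; lra.
  apply: ks1; lra.
have [qh|hq'] := leP q 2^-1.
  rewrite -psip.
  apply: (@incr_deriv R (psi p c) (kk p c) p q) => [x hx|x hx|]; last lra.
    apply: dP; lra.
  apply: ks2; lra.
have [q1p|q1p] := leP q (1 - p).
  rewrite -psi1p.
  apply: (@decr_deriv R (psi p c) (kk p c) q (1 - p)) => [x hx|x hx|]; last lra.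
    apply: dP; lra.
  rewrite ksym oppr_le0. apply: ks2; lra.
rewrite -psi1p.
apply: (@incr_deriv R (psi p c) (kk p c) (1 - p) q) => [x hx|x hx|]; last lra.
  apply: dP; lra.
rewrite ksym oppr_ge0. apply: ks1; lra.
Qed.

Definition bkl (q p : R) := q * ln (q / p) + (1 - q) * ln ((1 - q) / (1 - p)).

Lemma binP (p q pi : R) : 0 < p < 1 -> 0 < q < 1 ->
  Num.min p (1 - p) <= pi -> pi <= 2^-1 ->
  phi pi * (q - p)^+2 <= bkl q p.
Proof.
move=> hp hq hm hpi.
have ebkl : bkl q p = q * (ln q - ln p) + (1 - q) * (ln (1 - q) - ln (1 - p)).
  by rewrite /bkl !ln_div ?posrE //; lra.
have [p2|p2] := leP p 2^-1.
- have mp : Num.min p (1 - p) = p by apply/min_idPl; lra.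
  rewrite mp in hm.
  have := psi_ge0 p q ltac:(lra) hq.
  rewrite /psi -ebkl subr_ge0 => h.
  apply: le_trans h. apply: ler_wpM2r; first exact: sqr_ge0.
  apply: phi_mono => //; lra.
- have mp : Num.min p (1 - p) = 1 - p by apply/min_idPr; lra.
  rewrite mp in hm.
  have := psi_ge0 (1 - p) (1 - q) ltac:(lra) ltac:(lra).
  rewrite /psi subr_ge0.
  have -> : 1 - (1 - q) = q by ring.
  have -> : 1 - (1 - p) = p by ring.
  have -> : (1 - q) * (ln (1 - q) - ln (1 - p)) + q * (ln q - ln p) = bkl q p.
    by rewrite ebkl addrC.
  have -> : (1 - q - (1 - p)) ^+ 2 = (q - p)^+2 by ring.
  move=> h.
  apply: le_trans h. apply: ler_wpM2r; first exact: sqr_ge0.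
  apply: phi_mono => //; lra.
Qed.
End S.

Section S.
Variable R : realType.

Lemma KLE (T : finType) (r p : T -> R) : KL r p = \sum_t r t * ln (r t / p t).
Proof.
apply: eq_bigr => t _. case: eqP => [->|//]. by rewrite mul0r.
Qed.

Lemma ln_le_sub1 (z : R) : 0 < z -> ln z <= z - 1.
Proof.
move=> z0. have := @le_ln1Dx R (z - 1) ltac:(lra).
by rewrite addrC subrK.
Qed.

Lemma pt (a b k : R) : 0 <= a -> 0 < b -> 0 < k ->
  a * ln k + a - k * b <= a * ln (a / b).
Proof.
move=> a0 b0 k0.
have [->|ane] := eqVneq a 0.
  rewrite !mul0r !add0r. rewrite oppr_le0. apply: mulr_ge0; lra.
have a1 : 0 < a by rewrite lt_neqAle eq_sym ane.
have e : ln (a / b) = ln k - ln (k * b / a).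
  rewrite !ln_div ?posrE ?mulr_gt0 //. rewrite lnM ?posrE //. ring.
have h := ln_le_sub1 (k * b / a) ltac:(by rewrite divr_gt0 // mulr_gt0).
rewrite e mulrBr. 
have : a * ln (k * b / a) <= a * (k * b / a - 1) by rewrite ler_wpM2l // ltW.
have -> : a * (k * b / a - 1) = k * b - a by field; rewrite gt_eqF.
lra.
Qed.

Lemma logsum (T : finType) (P : pred T) (a b : T -> R) :
  (forall x, 0 <= a x) -> (forall x, 0 < b x) -> 0 < \sum_(x | P x) b x ->
  (\sum_(x | P x) a x) * ln ((\sum_(x | P x) a x) / (\sum_(x | P x) b x))
    <= \sum_(x | P x) a x * ln (a x / b x).
Proof.
move=> a0 b0 B0.
set A := \sum_(x | P x) a x. set B := \sum_(x | P x) b x.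
have A0 : 0 <= A by apply: sumr_ge0.
have [Ae|Ane] := eqVneq A 0.
  rewrite Ae mul0r. apply: sumr_ge0 => x Px.
  have : a x = 0.
    have /psumr_eq0P h : A = 0 by [].
    by apply: h => // i _; exact: a0.
  by move=> ->; rewrite mul0r.
have A1 : 0 < A by rewrite lt_neqAle eq_sym Ane.
set k := A / B.
have k0 : 0 < k by rewrite divr_gt0.
have h : \sum_(x | P x) (a x * ln k + a x - k * b x) <= \sum_(x | P x) a x * ln (a x / b x).
  by apply: ler_sum => x _; apply: pt.
apply: le_trans h.
rewrite big_split /= big_split /= -mulr_suml -/A sumrN -mulr_sumr -/B.
have -> : k * B = A by rewrite /k divfK // gt_eqF.
lra.
Qed.

Lemma convpt (r p d : R) : 0 <= r -> 0 < p -> 0 < d < 1 ->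
  ((1 - d) * r + d * p) * ln (((1 - d) * r + d * p) / p) <= (1 - d) * (r * ln (r / p)).
Proof.
move=> r0 p0 hd.
set a := (1 - d) * r + d * p.
have a0 : 0 < a by rewrite /a; apply: ltr_wpDl; [apply: mulr_ge0; lra| apply: mulr_gt0; lra].
set k := a / p.
have k0 : 0 < k by rewrite divr_gt0.
have h1 := pt ((1 - d) * r) ((1 - d) * p) k ltac:(apply: mulr_ge0; lra) ltac:(apply: mulr_gt0; lra) k0.
have h2 := pt (d * p) (d * p) k ltac:(apply: mulr_ge0; lra) ltac:(apply: mulr_gt0; lra) k0.
have e1 : (1 - d) * r / ((1 - d) * p) = r / p by field; apply/andP; split; rewrite gt_eqF //; lra.
rewrite e1 divff ?ln1 ?mulr0 in h1 h2; last by rewrite gt_eqF // mulr_gt0 //; lra.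
have ekp : k * p = a by rewrite /k divfK // gt_eqF.
have : a * ln k = ((1 - d) * r) * ln k + (d * p) * ln k by rewrite /a mulrDl.
have : k * ((1 - d) * p) + k * (d * p) = a by rewrite -mulrDr -ekp; congr (_ * _); ring.
rewrite /a in ekp *. move=> e2 e3.
rewrite e3 -mulrA. lra.
Qed.

Lemma ptexp_up (P d : R) : 0 < P -> - P <= d ->
  (P + d) * ln ((P + d) / P) <= d + d^+2 / (2 * P) + `|d|^+3 / (2 * P^+2).
Proof.
move=> P0 hd.
set t := d / P.
have ht : -1 <= t by rewrite /t ler_pdivlMr //; lra.
have e1 : (P + d) / P = 1 + t by rewrite /t; field; rewrite gt_eqF.
have e2 : P + d = P * (1 + t) by rewrite /t; field; rewrite gt_eqF.
rewrite e1 e2 -mulrA.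
have h := @hub R t ht.
have := ler_wpM2l (ltW P0) h.
have -> : P * (t + t ^+ 2 / 2 + `|t| ^+ 3 / 2) = d + d^+2 / (2 * P) + `|d|^+3 / (2 * P^+2).
  rewrite /t normrM (gtr0_norm (x := P^-1)) ?invr_gt0 //.
  by field; rewrite gt_eqF.
done.
Qed.

Lemma ptexp_lo (P d : R) : 0 < P -> - P <= d ->
  d + d^+2 / (2 * P) - `|d|^+3 / (2 * P^+2) <= (P + d) * ln ((P + d) / P).
Proof.
move=> P0 hd.
set t := d / P.
have ht : -1 <= t by rewrite /t ler_pdivlMr //; lra.
have e1 : (P + d) / P = 1 + t by rewrite /t; field; rewrite gt_eqF.
have e2 : P + d = P * (1 + t) by rewrite /t; field; rewrite gt_eqF.
rewrite e1 e2 -mulrA.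
have h := @hlb R t ht.
have := ler_wpM2l (ltW P0) h.
have -> : P * (t + t ^+ 2 / 2 - `|t| ^+ 3 / 2) = d + d^+2 / (2 * P) - `|d|^+3 / (2 * P^+2).
  rewrite /t normrM (gtr0_norm (x := P^-1)) ?invr_gt0 //.
  by field; rewrite gt_eqF.
done.
Qed.

Lemma KL_up (T : finType) (P D Q : T -> R) (e : R) :
  (forall x, 0 < P x) -> (forall x, 0 <= Q x) -> (forall x, Q x = P x + e * D x) ->
  \sum_x D x = 0 -> 0 <= e ->
  KL Q P <= e^+2 / 2 * (\sum_x D x ^+ 2 / P x) + e^+3 / 2 * (\sum_x `|D x| ^+ 3 / P x ^+ 2).
Proof.
move=> P0 Q0 QE D0 e0.
rewrite KLE.
have h : \sum_x Q x * ln (Q x / P x) <=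
   \sum_x (e * D x + e^+2 / 2 * (D x ^+ 2 / P x) + e^+3 / 2 * (`|D x| ^+ 3 / P x ^+ 2)).
  apply: ler_sum => x _. rewrite QE.
  have := @ptexp_up (P x) (e * D x) (P0 x) ltac:(have := Q0 x; rewrite QE; lra).
  have -> : e * D x + (e * D x) ^+ 2 / (2 * P x) + `|e * D x| ^+ 3 / (2 * P x ^+ 2)
     = e * D x + e^+2 / 2 * (D x ^+ 2 / P x) + e^+3 / 2 * (`|D x| ^+ 3 / P x ^+ 2).
    by rewrite normrM (ger0_norm e0); field; rewrite gt_eqF.
  done.
apply: (le_trans h).
rewrite big_split /= big_split /= -!mulr_sumr D0 mulr0 add0r. done.
Qed.

Lemma KL_lo (T : finType) (P D Q : T -> R) (e : R) :
  (forall x, 0 < P x) -> (forall x, 0 <= Q x) -> (forall x, Q x = P x + e * D x) ->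
  \sum_x D x = 0 -> 0 <= e ->
  e^+2 / 2 * (\sum_x D x ^+ 2 / P x) - e^+3 / 2 * (\sum_x `|D x| ^+ 3 / P x ^+ 2) <= KL Q P.
Proof.
move=> P0 Q0 QE D0 e0.
rewrite KLE.
have h : \sum_x (e * D x + e^+2 / 2 * (D x ^+ 2 / P x) - e^+3 / 2 * (`|D x| ^+ 3 / P x ^+ 2))
   <= \sum_x Q x * ln (Q x / P x).
  apply: ler_sum => x _. rewrite QE.
  have := @ptexp_lo (P x) (e * D x) (P0 x) ltac:(have := Q0 x; rewrite QE; lra).
  have -> : e * D x + (e * D x) ^+ 2 / (2 * P x) - `|e * D x| ^+ 3 / (2 * P x ^+ 2)
     = e * D x + e^+2 / 2 * (D x ^+ 2 / P x) - e^+3 / 2 * (`|D x| ^+ 3 / P x ^+ 2).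
    by rewrite normrM (ger0_norm e0); field; rewrite gt_eqF.
  done.
apply: (le_trans _ h).
rewrite big_split /= big_split /= sumrN -!mulr_sumr D0 mulr0 add0r. done.
Qed.

Lemma KL_le_chi2 (T : finType) (Q P : T -> R) :
  (forall x, 0 < P x) -> (forall x, 0 <= Q x) -> \sum_x Q x = \sum_x P x ->
  KL Q P <= chi2 Q P.
Proof.
move=> P0 Q0 QP.
rewrite KLE /chi2.
have h : \sum_x Q x * ln (Q x / P x) <= \sum_x ((Q x - P x) ^+ 2 / P x + (Q x - P x)).
  apply: ler_sum => x _.
  have [->|qne] := eqVneq (Q x) 0.
    rewrite mul0r sub0r sqrrN. have -> : P x ^+ 2 / P x = P x.
      by rewrite expr2 mulfK // gt_eqF.
    lra.
  have q0 : 0 < Q x by rewrite lt_neqAle eq_sym qne Q0.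
  have := ln_le_sub1 (Q x / P x) ltac:(by rewrite divr_gt0).
  move=> /(ler_wpM2l (Q0 x)).
  have -> : Q x * (Q x / P x - 1) = (Q x - P x) ^+ 2 / P x + (Q x - P x).
    by field; rewrite gt_eqF.
  done.
apply: (le_trans h).
by rewrite big_split /= sumrB QP subrr addr0.
Qed.

Lemma abs_le_half (T : finType) (d : T -> R) : \sum_x d x = 0 ->
  forall x, 2 * `|d x| <= \sum_y `|d y|.
Proof.
move=> d0 x.
rewrite (bigD1 x) //=.
have : \sum_(y | y != x) d y = - d x.
  by move: d0; rewrite (bigD1 x) //= => /eqP; rewrite addrC addr_eq0 => /eqP.
move=> e.
have : `|d x| <= \sum_(y | y != x) `|d y|.
  rewrite -normrN -e. exact: ler_norm_sum.
lra.
Qed.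

Lemma sq_le (T : finType) (d : T -> R) : \sum_x d x = 0 ->
  \sum_x d x ^+ 2 <= (\sum_x `|d x|) ^+ 2 / 2.
Proof.
move=> d0.
set S := \sum_x `|d x|.
have h : \sum_x d x ^+ 2 <= \sum_x `|d x| * (S / 2).
  apply: ler_sum => x _.
  rewrite -real_normK ?num_real // expr2.
  apply: ler_wpM2l => //.
  have := @abs_le_half T d d0 x. rewrite -/S. lra.
apply: (le_trans h). rewrite -mulr_suml -/S. rewrite expr2. lra.
Qed.

Lemma CS (T : finType) (a w : T -> R) : (forall x, 0 < w x) ->
  (\sum_x a x) ^+ 2 <= (\sum_x a x ^+ 2 / w x) * (\sum_x w x).
Proof.
move=> w0.
have e1 : (\sum_x a x) ^+ 2 = \sum_i \sum_j a i * a j.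
  rewrite expr2 big_distrl /=. apply: eq_bigr => i _. by rewrite big_distrr.
have e2 : (\sum_x a x ^+ 2 / w x) * (\sum_x w x) = \sum_i \sum_j a i ^+ 2 / w i * w j.
  rewrite big_distrl /=. apply: eq_bigr => i _. by rewrite big_distrr.
have e3 : \sum_i \sum_j a i ^+ 2 / w i * w j = \sum_i \sum_j a j ^+ 2 / w j * w i.
  by rewrite exchange_big.
have h : \sum_i \sum_j (2 * (a i * a j)) <=
   \sum_i \sum_j (a i ^+ 2 / w i * w j + a j ^+ 2 / w j * w i).
  apply: ler_sum => i _; apply: ler_sum => j _.
  have wi := w0 i. have wj := w0 j.
  rewrite -subr_ge0.
  have -> : a i ^+ 2 / w i * w j + a j ^+ 2 / w j * w i - 2 * (a i * a j)
     = (a i * w j - a j * w i) ^+ 2 / (w i * w j).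
    by field; apply/andP; split; rewrite gt_eqF.
  by rewrite divr_ge0 ?sqr_ge0 // mulr_ge0 // ltW.
have h2 : \sum_i \sum_j (2 * (a i * a j)) = 2 * (\sum_x a x) ^+ 2.
  rewrite e1 mulr_sumr. apply: eq_bigr => i _. by rewrite mulr_sumr.
have h3 : \sum_i \sum_j (a i ^+ 2 / w i * w j + a j ^+ 2 / w j * w i)
   = 2 * ((\sum_x a x ^+ 2 / w x) * (\sum_x w x)).
  rewrite e2.
  have -> : \sum_i \sum_j (a i ^+ 2 / w i * w j + a j ^+ 2 / w j * w i)
     = \sum_i \sum_j a i ^+ 2 / w i * w j + \sum_i \sum_j a j ^+ 2 / w j * w i.
    rewrite -big_split /=. apply: eq_bigr => i _. by rewrite big_split.
  rewrite -e3. ring.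
rewrite h2 h3 in h. lra.
Qed.
End S.

Section S.
Variable R : realType.

Lemma lim_le (B K : R) : (forall d, 0 < d < 1 -> (1 - d) * B <= K) -> B <= K.
Proof.
move=> h.
have [//|KB] := leP B K.
exfalso.
have h2 := h 2^-1 ltac:(lra).
have [B0|B0] := leP B 0.
  lra.
have [K0|K0] := leP K 0.
  nra.
have hd : 0 < (B - K) / (2 * B) < 1.
  apply/andP; split.
    by apply: divr_gt0; lra.
  rewrite ltr_pdivrMr; lra.
have := h _ hd.
have -> : (1 - (B - K) / (2 * B)) * B = (B + K) / 2 by field; rewrite gt_eqF.
lra.
Qed.

Lemma KL_ge0 (T : finType) (r p : T -> R) : (forall x, 0 < p x) -> (forall x, 0 <= r x) ->
  \sum_x r x = 1 -> \sum_x p x = 1 -> 0 <= KL r p.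
Proof.
move=> p0 r0 rs ps.
rewrite KLE.
have := @logsum R T predT r p r0 p0 ltac:(by rewrite ps).
by rewrite rs ps divr1 ln1 mulr0.
Qed.

Lemma KL_conv (T : finType) (r p : T -> R) (d : R) : (forall x, 0 < p x) -> (forall x, 0 <= r x) ->
  0 < d < 1 -> KL (fun x => (1 - d) * r x + d * p x) p <= (1 - d) * KL r p.
Proof.
move=> p0 r0 hd.
rewrite !KLE mulr_sumr. apply: ler_sum => x _. exact: convpt.
Qed.

Lemma pinsker (T : finType) (p r : T -> R) (pi : R) :
  (forall x, 0 < p x) -> \sum_x p x = 1 -> (forall x, 0 <= r x) -> \sum_x r x = 1 ->
  (forall A : {set T}, Num.min (probset p A) (1 - probset p A) <= pi) -> pi <= 2^-1 ->
  phi pi * (\sum_x `|r x - p x|) ^+ 2 <= 4 * KL r p.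
Proof.
move=> p0 ps r0 rs hpi pi2.
set A := [set x | p x <= r x].
set a := \sum_(x in A) p x.
set q := \sum_(x in A) r x.
have splitp : \sum_(x | x \notin A) p x = 1 - a.
  have := ps; rewrite (bigID (fun x => x \in A)) /= -/a; lra.
have splitr : \sum_(x | x \notin A) r x = 1 - q.
  have := rs; rewrite (bigID (fun x => x \in A)) /= -/q; lra.
have eS : \sum_x `|r x - p x| = 2 * (q - a).
  rewrite (bigID (fun x => x \in A)) /=.
  have e1 : \sum_(x in A) `|r x - p x| = q - a.
    rewrite /q /a -sumrB. apply: eq_bigr => x; rewrite inE => h.
    by rewrite ger0_norm // subr_ge0.
  have e2 : \sum_(x | x \notin A) `|r x - p x| = q - a.
    rewrite (_ : q - a = (1 - a) - (1 - q)); last by ring.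
    rewrite -splitp -splitr -sumrB.
    apply: eq_bigr => x; rewrite inE -ltNge => h.
    by rewrite ltr0_norm ?subr_lt0 // opprB.
  rewrite e1 e2; ring.
have qa0 : 0 <= q - a.
  have : 0 <= \sum_x `|r x - p x| by apply: sumr_ge0.
  rewrite eS. lra.
have q1 : q <= 1.
  have : 0 <= \sum_(x | x \notin A) r x by apply: sumr_ge0.
  rewrite splitr. lra.
rewrite eS.
have [qae|qane] := eqVneq (q - a) 0.
  rewrite qae mulr0 expr0n /= mulr0.
  by rewrite mulr_ge0 // KL_ge0.
have qa : 0 < q - a by rewrite lt_neqAle eq_sym qane.
have a0 : 0 <= a by apply: sumr_ge0 => x _; exact: ltW.
have apos : 0 < a.
  rewrite lt_neqAle eq_sym a0 andbT. apply/eqP => ae.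
  have h : forall x, x \in A -> p x = 0.
    move=> x xA. have /psumr_eq0P := ae. apply => // i _. exact: ltW.
  have : q = 0.
    rewrite /q big1 // => x xA. exfalso. have := p0 x. rewrite h //. lra.
  lra.
have a1 : a < 1 by lra.
have hA : Num.min a (1 - a) <= pi by apply: (hpi A).
suff : phi pi * (q - a) ^+ 2 <= KL r p.
  have -> : phi pi * (2 * (q - a)) ^+ 2 = 4 * (phi pi * (q - a) ^+ 2) by ring.
  move=> h; apply: ler_wpM2l => //. 
apply: lim_le => d hd.
set rd := fun x => (1 - d) * r x + d * p x.
have rd0 : forall x, 0 <= rd x.
  move=> x; rewrite /rd. apply: addr_ge0; apply: mulr_ge0 => //; try lra; exact: ltW.
have hconv := @KL_conv T r p d p0 r0 hd.
have sA : \sum_(x in A) rd x = (1 - d) * q + d * a.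
  by rewrite /rd big_split /= -!mulr_sumr.
have snA : \sum_(x | x \notin A) rd x = 1 - ((1 - d) * q + d * a).
  rewrite /rd big_split /= -!mulr_sumr splitp splitr. ring.
set qd := (1 - d) * q + d * a.
have l1 := @logsum R T (fun x => x \in A) rd p rd0 p0 ltac:(by rewrite -/a).
have l2 := @logsum R T (fun x => x \notin A) rd p rd0 p0 ltac:(by rewrite splitp; lra).
rewrite sA -/a in l1. rewrite snA splitp in l2.
have hKL : bkl R qd a <= KL rd p.
  rewrite KLE (bigID (fun x => x \in A)) /=. rewrite /bkl /qd. lra.
have qd0 : 0 < qd < 1.
  rewrite /qd. apply/andP; split; nra.
have hb := @binP R a qd pi ltac:(lra) qd0 hA pi2.
rewrite (_ : qd - a = (1 - d) * (q - a)) in hb; last by rewrite /qd; ring.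
rewrite -/rd in hconv.
have c : (1 - d) * ((1 - d) * (phi pi * (q - a) ^+ 2)) <= (1 - d) * KL r p.
  have -> : (1 - d) * ((1 - d) * (phi pi * (q - a) ^+ 2)) = phi pi * ((1 - d) * (q - a)) ^+ 2 by ring.
  apply: (le_trans hb). apply: (le_trans hKL). exact: hconv.
by rewrite ler_pM2l in c; [exact c | lra].
Qed.
End S.

Section S.
Variable R : realType.

Lemma chan_nonneg (X Y : finType) (W : Y -> X -> R) (r : X -> R) :
  (forall y x, 0 <= W y x) -> (forall x, 0 <= r x) -> forall y, 0 <= chan_apply W r y.
Proof. move=> W0 r0 y. apply: sumr_ge0 => x _. exact: mulr_ge0. Qed.

Lemma chan_sum (X Y : finType) (W : Y -> X -> R) (r : X -> R) :
  (forall x, \sum_y W y x = 1) -> \sum_y chan_apply W r y = \sum_x r x.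
Proof.
move=> W1. rewrite /chan_apply exchange_big /=. apply: eq_bigr => x _.
by rewrite -mulr_suml W1 mul1r.
Qed.

Lemma chan_diff (X Y : finType) (W : Y -> X -> R) (r p : X -> R) y :
  chan_apply W r y - chan_apply W p y = \sum_x W y x * (r x - p x).
Proof. rewrite /chan_apply -sumrB. apply: eq_bigr => x _. by rewrite mulrBr. Qed.

Lemma W_le1 (X Y : finType) (W : Y -> X -> R) :
  (forall y x, 0 <= W y x) -> (forall x, \sum_y W y x = 1) -> forall y x, W y x <= 1.
Proof.
move=> W0 W1 y x. rewrite -(W1 x) (bigD1 y) //=. rewrite lerDl. by apply: sumr_ge0.
Qed.

Lemma chi2_out (X Y : finType) (W : Y -> X -> R) (r p : X -> R) :
  (forall y x, 0 <= W y x) -> (forall x, \sum_y W y x = 1) ->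
  (forall y, 0 < chan_apply W p y) ->
  chi2 (chan_apply W r) (chan_apply W p) <=
    (\sum_x `|r x - p x|) ^+ 2 * \sum_y (chan_apply W p y)^-1.
Proof.
move=> W0 W1 wp0.
rewrite /chi2 mulr_sumr. apply: ler_sum => y _.
rewrite chan_diff. apply: ler_wpM2r; first by rewrite invr_ge0 ltW.
rewrite -real_normK ?num_real //.
have h : `|\sum_x W y x * (r x - p x)| <= \sum_x `|r x - p x|.
  apply: (le_trans (ler_norm_sum _ _ _)). apply: ler_sum => x _.
  rewrite normrM (ger0_norm (W0 y x)).
  rewrite -[leRHS]mul1r. apply: ler_wpM2r => //. exact: W_le1.
rewrite lerXn2r ?nnegrE //. apply: sumr_ge0 => x _; exact: normr_ge0.
Qed.

Lemma S_le_chi2 (X : finType) (r p : X -> R) :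
  (forall x, 0 < p x) -> \sum_x p x = 1 ->
  (\sum_x `|r x - p x|) ^+ 2 <= chi2 r p.
Proof.
move=> p0 ps.
have := @CS R X (fun x => `|r x - p x|) p p0.
rewrite ps mulr1 /chi2. 
have -> : \sum_x `|r x - p x| ^+ 2 / p x = \sum_x (r x - p x) ^+ 2 / p x.
  apply: eq_bigr => x _. by rewrite real_normK ?num_real.
done.
Qed.

Lemma chi2_le_S (X : finType) (r p : X -> R) (m : R) :
  0 < m -> (forall x, m <= p x) -> \sum_x r x = \sum_x p x ->
  chi2 r p <= (\sum_x `|r x - p x|) ^+ 2 / (2 * m).
Proof.
move=> m0 mp rp.
have d0 : \sum_x (r x - p x) = 0 by rewrite sumrB rp subrr.
have h := @sq_le R X (fun x => r x - p x) d0.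
rewrite /chi2.
have h2 : \sum_x (r x - p x) ^+ 2 / p x <= \sum_x (r x - p x) ^+ 2 / m.
  apply: ler_sum => x _. apply: ler_wpM2l; first exact: sqr_ge0.
  rewrite lef_pV2 ?posrE //. exact: (lt_le_trans m0).
apply: (le_trans h2). rewrite -mulr_suml.
have -> : (\sum_x `|r x - p x|) ^+ 2 / (2 * m) = (\sum_x `|r x - p x|) ^+ 2 / 2 / m.
  by rewrite invfM mulrA.
apply: ler_wpM2r => //. by rewrite invr_ge0 ltW.
Qed.

Lemma small (K1 K2 u1 u2 : R) : 0 <= K1 -> 0 <= K2 -> 0 < u1 -> 0 < u2 ->
  exists e, [/\ 0 < e, e < 1, e * K1 < u1 & e * K2 < u2].
Proof.
move=> k1 k2 v1 v2.
set e := Num.min 2^-1 (Num.min (u1 / (K1 + 1)) (u2 / (K2 + 1))).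
have e1 : e <= 2^-1 by rewrite /e ge_min lexx.
have e2 : e <= u1 / (K1 + 1) by rewrite /e !ge_min lexx orbT.
have e3 : e <= u2 / (K2 + 1) by rewrite /e !ge_min lexx !orbT.
have e0 : 0 < e by rewrite /e !lt_min !divr_gt0 //; lra.
exists e; split => //; first lra.
  rewrite ler_pdivlMr in e2; last lra. nra.
rewrite ler_pdivlMr in e3; last lra. nra.
Qed.
End S.

Theorem theorem3 (R : realType) (X Y : finType)
  (hX : (2 <= #|X|)%N) (hY : (2 <= #|Y|)%N)
  (P : X * Y -> R) (hP : is_pmf P)
  (hPX : forall x, 0 < marg1 P x) (hPY : forall y, 0 < marg2 P y) :
  let PX := marg1 P in
  let W := chan P in
  let pmax := \big[Num.max/0]_(A : {set X})
                 Num.min (probset PX A) (1 - probset PX A) in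
  let pmin := \big[Num.min/1]_(x : X) PX x in
  eta_chi2 PX W <= eta_KL PX W /\
  eta_KL PX W <= 2 * eta_chi2 PX W / (phi pmax * pmin).
Proof.
move=> PX W pmax pmin.
case: hP => P0 P1.
have p0 : forall x, 0 < PX x by exact: hPX.
have ps : \sum_x PX x = 1.
  rewrite /PX /marg1 pair_bigA /= -P1. apply: eq_bigr => -[x y] _. done.
have W0 : forall y x, 0 <= W y x.
  move=> y x. rewrite /W /chan. apply: divr_ge0 => //. exact: ltW.
have W1 : forall x, \sum_y W y x = 1.
  move=> x. rewrite /W /chan -mulr_suml -/(marg1 P x) -/(PX x) divff //. by rewrite gt_eqF.
have wpE : forall y, chan_apply W PX y = marg2 P y.
  move=> y. rewrite /chan_apply /marg2. apply: eq_bigr => x _.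
  rewrite /W /chan divfK //. by rewrite gt_eqF.
have wp0 : forall y, 0 < chan_apply W PX y by move=> y; rewrite wpE.
have wps : \sum_y chan_apply W PX y = 1 by rewrite chan_sum.
have [x0 [x1 [_ _ hx01]]] : exists x0 x1, [/\ x0 \in X, x1 \in X & x0 != x1].
  by apply/card_gt1P.
have px0 : PX x0 < 1.
  move: ps. rewrite (bigD1 x0) //= (bigD1 x1) //=; last by rewrite eq_sym.
  have := p0 x1. have : 0 <= \sum_(i | (i != x0) && (i != x1)) PX i.
    by apply: sumr_ge0 => i _; exact: ltW.
  lra.
have hpm : forall A : {set X}, Num.min (probset PX A) (1 - probset PX A) <= pmax.
  move=> A. rewrite /pmax. exact: (le_bigmax _ _ A).
have hpm2 : pmax <= 2^-1.
  rewrite /pmax. apply: bigmax_le; first lra.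
  move=> A _. set a := probset PX A.
  have [ha|ha] := leP a 2^-1.
    by rewrite ge_min ha.
  rewrite ge_min. apply/orP; right. lra.
have pmax0 : 0 < pmax.
  apply: lt_le_trans (hpm [set x0]).
  rewrite /probset big_set1. rewrite lt_min. apply/andP; split; [exact: p0 | lra].
have phi2 : 2 <= phi pmax by apply: phi_ge2; lra.
have hmin : forall x, pmin <= PX x by move=> x; rewrite /pmin; exact: bigmin_le.
have pmin0 : 0 < pmin.
  rewrite /pmin. apply: (big_ind (fun v => 0 < v)) => //.
  by move=> u v u0 v0; rewrite lt_min u0 v0.
have pinsk : forall r, is_pmf r ->
    phi pmax * (\sum_x `|r x - PX x|) ^+ 2 <= 4 * KL r PX.
  move=> r [r0 rs]. exact: pinsker.
have chi2KL : forall r, is_pmf r -> chi2 r PX <= 2 * KL r PX / (phi pmax * pmin).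
  move=> r hr. have h := pinsk r hr. case: hr => r0 rs.
  have h2 := @chi2_le_S R X r PX pmin pmin0 hmin ltac:(by rewrite rs ps).
  apply: (le_trans h2).
  have -> : 2 * KL r PX / (phi pmax * pmin) = (4 * KL r PX / phi pmax) / (2 * pmin).
    by field; apply/andP; split; rewrite gt_eqF //; lra.
  apply: ler_wpM2r; first by rewrite invr_ge0; lra.
  by rewrite ler_pdivlMr; [rewrite mulrC | lra].
set Ky := \sum_y (chan_apply W PX y)^-1.
have Ky0 : 0 <= Ky by apply: sumr_ge0 => y _; rewrite invr_ge0 ltW.
have chiub : forall r, is_pmf r -> 0 < chi2 r PX ->
    chi2 (chan_apply W r) (chan_apply W PX) / chi2 r PX <= Ky.
  move=> r hr c0. rewrite ler_pdivrMr //.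
  apply: (le_trans (@chi2_out R X Y W r PX W0 W1 wp0)). rewrite mulrC.
  apply: ler_wpM2l => //. exact: S_le_chi2.
have hubchi : has_ubound [set t | exists r : X -> R, is_pmf r /\ 0 < chi2 r PX /\
      t = chi2 (chan_apply W r) (chan_apply W PX) / chi2 r PX].
  exists Ky => t [r [hr [c0 ->]]]. exact: chiub.
have hchi : forall r, is_pmf r -> 0 < chi2 r PX ->
    chi2 (chan_apply W r) (chan_apply W PX) / chi2 r PX <= eta_chi2 PX W.
  move=> r hr c0. apply: (ub_le_sup hubchi). by exists r.
set rw : X -> R := fun x => if x == x0 then 1 else 0.
have rwp : is_pmf rw.
  split; first by move=> x; rewrite /rw; case: ifP.
  rewrite (bigD1 x0) //= /rw eqxx big1 ?addr0 // => i /negbTE ->. done.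
have KLrw : 0 < KL rw PX.
  rewrite KLE (bigD1 x0) //= big1 ?addr0; last first.
    by move=> i /negbTE hi; rewrite /rw hi mul0r.
  rewrite /rw eqxx mul1r div1r. apply: ln_gt0. rewrite invf_gt1 //.
have Ppmf : forall r, is_pmf r -> (forall y, 0 <= chan_apply W r y) /\ \sum_y chan_apply W r y = 1.
  move=> r [r0 rs]. split; first exact: chan_nonneg.
  by rewrite chan_sum.
have chirw : 0 < chi2 rw PX.
  apply: (lt_le_trans KLrw). case: rwp => r0 rs. apply: KL_le_chi2 => //. by rewrite rs ps.
have chi_ge0 : forall (T : finType) (a b : T -> R), (forall t, 0 < b t) -> 0 <= chi2 a b.
  move=> T a b b0. apply: sumr_ge0 => t _. apply: divr_ge0; [exact: sqr_ge0 | exact: ltW].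
have echi0 : 0 <= eta_chi2 PX W.
  apply: le_trans (hchi rw rwp chirw). apply: divr_ge0; last exact: ltW.
  exact: chi_ge0.
have klub : forall r, is_pmf r -> 0 < KL r PX ->
    KL (chan_apply W r) (chan_apply W PX) / KL r PX <= 2 * eta_chi2 PX W / (phi pmax * pmin).
  move=> r hr k0.
  have [wr0 wrs] := Ppmf r hr.
  have h1 : KL (chan_apply W r) (chan_apply W PX) <= chi2 (chan_apply W r) (chan_apply W PX).
    apply: KL_le_chi2 => //. by rewrite wrs wps.
  have c0 : 0 < chi2 r PX.
    apply: (lt_le_trans k0). case: hr => r0 rs. apply: KL_le_chi2 => //. by rewrite rs ps.
  have h2 := hchi r hr c0. rewrite ler_pdivrMr // in h2.
  have h3 := chi2KL r hr.
  rewrite ler_pdivrMr //.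
  apply: (le_trans h1). apply: (le_trans h2).
  have -> : 2 * eta_chi2 PX W / (phi pmax * pmin) * KL r PX
     = eta_chi2 PX W * (2 * KL r PX / (phi pmax * pmin)).
    by field; apply/andP; split; rewrite gt_eqF //; lra.
  by apply: ler_wpM2l.
have klrw0 : 0 <= KL (chan_apply W rw) (chan_apply W PX).
  have [wr0 wrs] := Ppmf rw rwp. apply: KL_ge0 => //.
have hubkl : has_ubound [set t | exists r : X -> R, is_pmf r /\ 0 < KL r PX /\
      t = KL (chan_apply W r) (chan_apply W PX) / KL r PX].
  exists (2 * eta_chi2 PX W / (phi pmax * pmin)) => t [r [hr [k0 ->]]]. exact: klub.
have hkl : forall r, is_pmf r -> 0 < KL r PX ->
    KL (chan_apply W r) (chan_apply W PX) / KL r PX <= eta_KL PX W.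
  move=> r hr c0. apply: (ub_le_sup hubkl). by exists r.
have ekl0 : 0 <= eta_KL PX W.
  apply: le_trans (hkl rw rwp KLrw). apply: divr_ge0 => //; exact: ltW.
split; last first.
  rewrite /eta_KL /contraction. apply: ge_sup.
    by exists (KL (chan_apply W rw) (chan_apply W PX) / KL rw PX); exists rw.
  move=> t [r [hr [k0 ->]]]. exact: klub.
rewrite /eta_chi2 /contraction. apply: ge_sup.
  by exists (chi2 (chan_apply W rw) (chan_apply W PX) / chi2 rw PX); exists rw.
move=> t [r [hr [c0 ->]]].
set e := eta_KL PX W.
set Bc := chi2 r PX. set Ac := chi2 (chan_apply W r) (chan_apply W PX).
rewrite ler_pdivrMr //.
have [//|lt] := leP Ac (e * Bc).
exfalso.
have [r0 rs] := hr.
have [wr0 wrs] := Ppmf r hr.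
set D := fun x => r x - PX x.
have D0 : \sum_x D x = 0 by rewrite /D sumrB rs ps subrr.
set DY := fun y => chan_apply W r y - chan_apply W PX y.
have DY0 : \sum_y DY y = 0 by rewrite /DY sumrB wrs wps subrr.
set M := \sum_x `|D x| ^+ 3 / PX x ^+ 2.
set M' := \sum_y `|DY y| ^+ 3 / chan_apply W PX y ^+ 2.
have M0 : 0 <= M.
  apply: sumr_ge0 => x _. apply: divr_ge0; [exact: exprn_ge0 | exact: exprn_ge0 (ltW (p0 x))].
have M'0 : 0 <= M'.
  apply: sumr_ge0 => x _. apply: divr_ge0; [exact: exprn_ge0 | exact: exprn_ge0 (ltW (wp0 x))].
have hu2 : 0 < Ac - e * Bc by rewrite subr_gt0.
have [eps [eps0 eps1 h1 h2]] := @small R M (M' + e * M) Bc (Ac - e * Bc) M0 (addr_ge0 M'0 (mulr_ge0 ekl0 M0)) c0 hu2.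
set re := fun x => PX x + eps * D x.
have re0 : forall x, 0 <= re x.
  move=> x. rewrite /re /D.
  have -> : PX x + eps * (r x - PX x) = (1 - eps) * PX x + eps * r x by ring.
  apply: addr_ge0; apply: mulr_ge0; try lra; [exact: ltW | exact: r0].
have res : \sum_x re x = 1 by rewrite /re big_split /= -mulr_sumr D0 mulr0 addr0.
have rep : is_pmf re by split.
have BcE : Bc = \sum_x D x ^+ 2 / PX x by [].
have AcE : Ac = \sum_y DY y ^+ 2 / chan_apply W PX y by [].
have inU := @KL_up R X PX D re eps p0 re0 (fun x => erefl) D0 (ltW eps0).
have inL := @KL_lo R X PX D re eps p0 re0 (fun x => erefl) D0 (ltW eps0).
rewrite -BcE -/M in inU inL.
have [wre0 _] := Ppmf re rep.
have outE : forall y, chan_apply W re y = chan_apply W PX y + eps * DY y.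
  move=> y. rewrite /DY chan_diff /chan_apply mulr_sumr -big_split /=.
  apply: eq_bigr => x _. rewrite /re /D. ring.
have outL := @KL_lo R Y (chan_apply W PX) DY (chan_apply W re) eps wp0 wre0 outE DY0 (ltW eps0).
rewrite -AcE -/M' in outL.
have kre : 0 < KL re PX.
  apply: lt_le_trans inL.
  have -> : eps ^+ 2 / 2 * Bc - eps ^+ 3 / 2 * M = eps ^+ 2 / 2 * (Bc - eps * M) by ring.
  apply: mulr_gt0; first by apply: divr_gt0 => //; exact: exprn_gt0.
  lra.
have hk := hkl re rep kre. rewrite ler_pdivrMr // in hk.
have hk2 : e * KL re PX <= e * (eps ^+ 2 / 2 * Bc + eps ^+ 3 / 2 * M) by apply: ler_wpM2l.
have hh : eps ^+ 2 / 2 * (eps * (M' + e * M)) < eps ^+ 2 / 2 * (Ac - e * Bc).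
  rewrite ltr_pM2l //. apply: divr_gt0 => //; exact: exprn_gt0.
have : eps ^+ 2 / 2 * Ac - eps ^+ 3 / 2 * M' <= e * (eps ^+ 2 / 2 * Bc + eps ^+ 3 / 2 * M).
  apply: (le_trans outL). apply: (le_trans hk). exact: hk2.
rewrite (_ : eps ^+ 2 / 2 * (eps * (M' + e * M)) = eps ^+ 3 / 2 * M' + e * (eps ^+ 3 / 2 * M)) in hh; last by ring.
rewrite (_ : eps ^+ 2 / 2 * (Ac - e * Bc) = eps ^+ 2 / 2 * Ac - e * (eps ^+ 2 / 2 * Bc)) in hh; last by ring.
rewrite mulrDr. lra.
Qed.
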